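(* Let $R$ be the bracket algebra on six points, i.e. the subring of $\mathbb{C}[u_{ij}: 0\le i\le 3, 0\le j\le 5]$ generated by the $4\times4$ minors $[abcd]$ (columns $a,b,c,d$) of a generic $4\times 6$ matrix with columns labelled $0,\dots,5$. The symmetric group $\mathbb{S}_6$ acts on $R$ by permuting column labels, $\sigma([abcd])=[\sigma(a)\sigma(b)\sigma(c)\sigma(d)]$. Let $B=[0125][0234][1345]-[0124][2345][0135]$. Then the product $[0123][0145][2345]$ lies in the ideal of $R$ generated by $\{\sigma(B):\sigma\in\mathbb{S}_6\}$. In particular, if $0,\dots,5$ are points of $\mathbb{P}^3(\mathbb{C})$ with representative vectors such that the lines $01$, $23$, $45$ are mutually skew, then there is a permutation $\sigma$ of $\{0,\dots,5\}$ with $\sigma(B)\ne 0$ when evaluated at these vectors.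
   Context: $[abcd]$ denotes the determinant of the $4\times4$ matrix with columns the vectors labelled $a,b,c,d$. Lines $ab$ and $cd$ in $\mathbb{P}^3$ meet if and only if $[abcd]=0$. *)

(* Defs.v *)
From HB Require Import structures.
From mathcomp Require Import all_boot all_order all_algebra all_fingroup.
From mathcomp Require Import reals complex.
From mathcomp Require Import mpoly.
Set Implicit Arguments. Unset Strict Implicit. Unset Printing Implicit Defensive.
Import Order.TTheory GRing.Theory Num.Theory.
Local Open Scope ring_scope.

Definition CC (R : realType) : fieldType := (R[i])%C.

(* Polynomial ring C[u_ij : 0 <= i <= 3, 0 <= j <= 5]; the variable u_ij is
   'X_(mxvec_index i j), indexed by 'I_(4*6). *)
Definition PR (R : realType) := {mpoly CC R[4 * 6]}.

Definition genmx (R : realType) : 'M[PR R]_(4, 6) :=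
  \matrix_(i < 4, j < 6) 'X_(mxvec_index i j).

Definition bracket (R : realType) (a b c d : 'I_6) : PR R :=
  \det (\matrix_(i < 4, k < 4) genmx R i (tnth [tuple a; b; c; d] k)).

Inductive in_bracket_alg (R : realType) : PR R -> Prop :=
  | ba_bracket a b c d : in_bracket_alg (bracket R a b c d)
  | ba_const (z : CC R) : in_bracket_alg z%:MP
  | ba_add p q : in_bracket_alg p -> in_bracket_alg q -> in_bracket_alg (p + q)
  | ba_mul p q : in_bracket_alg p -> in_bracket_alg q -> in_bracket_alg (p * q).

Definition l0 : 'I_6 := inord 0.
Definition l1 : 'I_6 := inord 1.
Definition l2 : 'I_6 := inord 2.
Definition l3 : 'I_6 := inord 3.
Definition l4 : 'I_6 := inord 4.
Definition l5 : 'I_6 := inord 5.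

Definition sigmaB (R : realType) (s : 'S_6) : PR R :=
  bracket R (s l0) (s l1) (s l2) (s l5) * bracket R (s l0) (s l2) (s l3) (s l4)
    * bracket R (s l1) (s l3) (s l4) (s l5)
  - bracket R (s l0) (s l1) (s l2) (s l4) * bracket R (s l2) (s l3) (s l4) (s l5)
    * bracket R (s l0) (s l1) (s l3) (s l5).

(* Membership in the ideal of the bracket algebra generated by {sigma(B)}:
   a combination sum_sigma r_sigma * sigma(B) with all r_sigma in the
   bracket algebra (the generating set is finite, indexed by S_6). *)
Definition in_ideal_sigmaB (R : realType) (p : PR R) : Prop :=
  exists r : 'S_6 -> PR R,
    (forall s, in_bracket_alg (r s)) /\ p = \sum_(s : 'S_6) r s * sigmaB R s.

(* Evaluation of a polynomial at a 4 x 6 complex matrix M (u_ij := M i j);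
   the columns of M are the representative vectors of the six points. *)
Definition evalM (R : realType) (M : 'M[CC R]_(4, 6)) (p : PR R) : CC R :=
  p.@[fun k => mxvec M 0 k].

(* The line through the points a, b of P^3, as the row space of the 2 x 4
   matrix with rows the representative vectors a, b. *)
Definition linemx (R : realType) (M : 'M[CC R]_(4, 6)) (a b : 'I_6) : 'M[CC R]_(2, 4) :=
  \matrix_(k < 2, i < 4) M i (if k == ord0 then a else b).

Definition is_line (R : realType) (M : 'M[CC R]_(4, 6)) (a b : 'I_6) : Prop :=
  \rank (linemx M a b) = 2%N.

Definition skew_lines (R : realType) (M : 'M[CC R]_(4, 6)) (a b c d : 'I_6) : Prop :=
  is_line M a b /\ is_line M c d /\ (linemx M a b :&: linemx M c d)%MS = 0.

(* Main.v *)
Require Import Defs.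
From HB Require Import structures.
From mathcomp Require Import all_boot all_order all_algebra all_fingroup.
From mathcomp Require Import reals complex.
From mathcomp Require Import mpoly.
From mathcomp Require Import ring.
Import Order.TTheory GRing.Theory Num.Theory.
Local Open Scope ring_scope.

Definition D3 (T : comNzRingType) (f : nat -> nat -> T) :=
  f 0%N 0%N * (f 1%N 1%N * f 2%N 2%N - f 1%N 2%N * f 2%N 1%N)
  - f 0%N 1%N * (f 1%N 0%N * f 2%N 2%N - f 1%N 2%N * f 2%N 0%N)
  + f 0%N 2%N * (f 1%N 0%N * f 2%N 1%N - f 1%N 1%N * f 2%N 0%N).
Arguments D3 {T}.
Definition D4f (T : comNzRingType) (f : nat -> nat -> T) :=
  f 0%N 0%N * D3 (fun i j => f i.+1 (bump 0 j))
  - f 0%N 1%N * D3 (fun i j => f i.+1 (bump 1 j))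
  + f 0%N 2%N * D3 (fun i j => f i.+1 (bump 2 j))
  - f 0%N 3%N * D3 (fun i j => f i.+1 (bump 3 j)).
Arguments D4f {T}.
Definition fun4 (T : Type) (x y z w : nat -> T) : nat -> nat -> T :=
  fun i k => match k with 0 => x i | 1 => y i | 2 => z i | _ => w i end%N.
Arguments fun4 {T}.
Definition D4 (T : comNzRingType) (x y z w : nat -> T) := D4f (fun4 x y z w).
Arguments D4 {T}.

Lemma det4E (T : comNzRingType) (f : nat -> nat -> T) :
  \det (\matrix_(i < 4, j < 4) f i j) = D4f f.
Proof.
rewrite (expand_det_row _ 0) !big_ord_recl big_ord0 /cofactor.
rewrite !(expand_det_row _ 0) !big_ord_recl !big_ord0 /cofactor.
rewrite !(expand_det_row _ 0) !big_ord_recl !big_ord0 /cofactor.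
rewrite !det_mx11 !mxE /= /D4f /D3 /bump /=.
ring.
Qed.

Lemma GP (T : comNzRingType) (a b c d e f : nat -> T) :
  D4 a b c d * D4 a b e f - D4 a b c e * D4 a b d f + D4 a b c f * D4 a b d e = 0.
Proof. rewrite /D4 /D4f /D3 /fun4 /bump /=. ring. Qed.
Lemma D4_12 (T : comNzRingType) (a b c d : nat -> T) : D4 b a c d = - D4 a b c d.
Proof. rewrite /D4 /D4f /D3 /fun4 /bump /=. ring. Qed.
Lemma D4_23 (T : comNzRingType) (a b c d : nat -> T) : D4 a c b d = - D4 a b c d.
Proof. rewrite /D4 /D4f /D3 /fun4 /bump /=. ring. Qed.
Lemma D4_34 (T : comNzRingType) (a b c d : nat -> T) : D4 a b d c = - D4 a b c d.
Proof. rewrite /D4 /D4f /D3 /fun4 /bump /=. ring. Qed.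

Lemma det_tuple4 (T : comNzRingType) (A : 'M[T]_(4, 6)) (a b c d : 'I_6) :
  \det (\matrix_(i < 4, k < 4) A i (tnth [tuple a; b; c; d] k)) =
  D4 (fun i => A (inord i) a) (fun i => A (inord i) b)
     (fun i => A (inord i) c) (fun i => A (inord i) d).
Proof.
rewrite /D4 -det4E; congr (\det _); apply/matrixP => i k; rewrite !mxE.
case: k => [[|[|[|[|//]]]] Hk]; by rewrite /= inord_val.
Qed.

Section Br.
Variable R : realType.
Definition cv (j : 'I_6) : nat -> PR R := fun i => @Defs.genmx R (inord i) j.
Lemma bracketE a b c d : bracket R a b c d = D4 (cv a) (cv b) (cv c) (cv d).
Proof. exact: det_tuple4. Qed.
Lemma br12 a b c d : bracket R b a c d = - bracket R a b c d.
Proof. by rewrite !bracketE D4_12. Qed.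
Lemma br23 a b c d : bracket R a c b d = - bracket R a b c d.
Proof. by rewrite !bracketE D4_23. Qed.
Lemma br34 a b c d : bracket R a b d c = - bracket R a b c d.
Proof. by rewrite !bracketE D4_34. Qed.
Lemma brGP a b c d e f : bracket R a b c d * bracket R a b e f
   - bracket R a b c e * bracket R a b d f + bracket R a b c f * bracket R a b d e = 0.
Proof. by rewrite !bracketE GP. Qed.
End Br.

Lemma lne (i j : nat) : (i < 6)%N -> (j < 6)%N -> i != j -> (inord i : 'I_6) != inord j.
Proof. by move=> hi hj hij; apply/eqP => /(congr1 val); rewrite /= !inordK //; apply/eqP. Qed.
Lemma n01 : l0 != l1. Proof. by rewrite /l0 /l1 lne. Qed.
Lemma n02 : l0 != l2. Proof. by rewrite /l0 /l2 lne. Qed.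
Lemma n03 : l0 != l3. Proof. by rewrite /l0 /l3 lne. Qed.
Lemma n04 : l0 != l4. Proof. by rewrite /l0 /l4 lne. Qed.
Lemma n05 : l0 != l5. Proof. by rewrite /l0 /l5 lne. Qed.
Lemma n10 : l1 != l0. Proof. by rewrite /l1 /l0 lne. Qed.
Lemma n12 : l1 != l2. Proof. by rewrite /l1 /l2 lne. Qed.
Lemma n13 : l1 != l3. Proof. by rewrite /l1 /l3 lne. Qed.
Lemma n14 : l1 != l4. Proof. by rewrite /l1 /l4 lne. Qed.
Lemma n15 : l1 != l5. Proof. by rewrite /l1 /l5 lne. Qed.
Lemma n20 : l2 != l0. Proof. by rewrite /l2 /l0 lne. Qed.
Lemma n21 : l2 != l1. Proof. by rewrite /l2 /l1 lne. Qed.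
Lemma n23 : l2 != l3. Proof. by rewrite /l2 /l3 lne. Qed.
Lemma n24 : l2 != l4. Proof. by rewrite /l2 /l4 lne. Qed.
Lemma n25 : l2 != l5. Proof. by rewrite /l2 /l5 lne. Qed.
Lemma n30 : l3 != l0. Proof. by rewrite /l3 /l0 lne. Qed.
Lemma n31 : l3 != l1. Proof. by rewrite /l3 /l1 lne. Qed.
Lemma n32 : l3 != l2. Proof. by rewrite /l3 /l2 lne. Qed.
Lemma n34 : l3 != l4. Proof. by rewrite /l3 /l4 lne. Qed.
Lemma n35 : l3 != l5. Proof. by rewrite /l3 /l5 lne. Qed.
Lemma n40 : l4 != l0. Proof. by rewrite /l4 /l0 lne. Qed.
Lemma n41 : l4 != l1. Proof. by rewrite /l4 /l1 lne. Qed.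
Lemma n42 : l4 != l2. Proof. by rewrite /l4 /l2 lne. Qed.
Lemma n43 : l4 != l3. Proof. by rewrite /l4 /l3 lne. Qed.
Lemma n45 : l4 != l5. Proof. by rewrite /l4 /l5 lne. Qed.
Lemma n50 : l5 != l0. Proof. by rewrite /l5 /l0 lne. Qed.
Lemma n51 : l5 != l1. Proof. by rewrite /l5 /l1 lne. Qed.
Lemma n52 : l5 != l2. Proof. by rewrite /l5 /l2 lne. Qed.
Lemma n53 : l5 != l3. Proof. by rewrite /l5 /l3 lne. Qed.
Lemma n54 : l5 != l4. Proof. by rewrite /l5 /l4 lne. Qed.
#[global] Hint Resolve n01 n02 n03 n04 n05 n10 n12 n13 n14 n15 n20 n21 n23 n24 n25 n30 n31 n32 n34 n35 n40 n41 n42 n43 n45 n50 n51 n52 n53 n54 : core.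

Lemma sum4 (V : nmodType) (I : finType) (F : I -> V) (a b c d : I) :
  b != a -> c != a -> c != b -> d != a -> d != b -> d != c ->
  (forall i, i != a -> i != b -> i != c -> i != d -> F i = 0) ->
  \sum_i F i = F a + F b + F c + F d.
Proof.
move=> ba ca cb da db dc H.
rewrite (bigD1 a) //= (bigD1 b) ?ba //= (bigD1 c) ?ca ?cb //= (bigD1 d) ?da ?db ?dc //=.
rewrite big1 ?addr0 ?addrA //.
by move=> i /andP [/andP [/andP [ia ib] ic] id]; apply: H.
Qed.

Lemma tpE (T : finType) (x y z : T) : tperm x y z = if z == x then y else if z == y then x else z.
Proof. by case: tpermP => [->|->|]; rewrite ?eqxx //; [case: eqP => // ->; rewrite eqxx | move=> /eqP/negbTE -> /eqP/negbTE ->]. Qed.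
Ltac evperm := rewrite ?permM ?perm1 ?tpE; do 3 (rewrite ?eqxx ?(negbTE n01) ?(negbTE n02) ?(negbTE n03) ?(negbTE n04) ?(negbTE n05) ?(negbTE n10) ?(negbTE n12) ?(negbTE n13) ?(negbTE n14) ?(negbTE n15) ?(negbTE n20) ?(negbTE n21) ?(negbTE n23) ?(negbTE n24) ?(negbTE n25) ?(negbTE n30) ?(negbTE n31) ?(negbTE n32) ?(negbTE n34) ?(negbTE n35) ?(negbTE n40) ?(negbTE n41) ?(negbTE n42) ?(negbTE n43) ?(negbTE n45) ?(negbTE n50) ?(negbTE n51) ?(negbTE n52) ?(negbTE n53) ?(negbTE n54) /=).
Lemma part1 (R : realType) :
  in_ideal_sigmaB (bracket R l0 l1 l2 l3 * bracket R l0 l1 l4 l5 * bracket R l2 l3 l4 l5).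
Proof.
pose k : CC R := (3%:R)^-1.
pose s2 : 'S_6 := tperm l4 l5.
pose s3 : 'S_6 := tperm l3 l4.
pose s4 : 'S_6 := (tperm l3 l4 * tperm l4 l5)%g.
have ne21 : s2 != 1%g.
  by apply/eqP => /(congr1 (fun s : 'S_6 => s l4)); rewrite perm1 tpermL; apply/eqP.
have ne31 : s3 != 1%g.
  by apply/eqP => /(congr1 (fun s : 'S_6 => s l4)); rewrite perm1 tpermR; apply/eqP.
have ne41 : s4 != 1%g.
  by apply/eqP => /(congr1 (fun s : 'S_6 => s l4)); rewrite perm1 permM tpermR tpermD //; apply/eqP.
have ne32 : s3 != s2.
  by apply/eqP => /(congr1 (fun s : 'S_6 => s l3)); rewrite tpermL tpermD //; apply/eqP.
have ne42 : s4 != s2.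
  by apply/eqP => /(congr1 (fun s : 'S_6 => s l3)); rewrite permM !tpermL tpermD //; apply/eqP.
have ne43 : s4 != s3.
  by apply/eqP => /(congr1 (fun s : 'S_6 => s l3)); rewrite permM !tpermL; apply/eqP.
pose c (s : 'S_6) : CC R := if s == 1%g then - k else if s == s2 then - k
  else if s == s3 then k else if s == s4 then k else 0.
exists (fun s => (c s)%:MP); split; first by move=> s; exact: ba_const.
rewrite (sum4 _ _ _ _ _ _ _ ne21 ne31 ne32 ne41 ne42 ne43); last first.
  by move=> s h1 h2 h3 h4; rewrite /c (negbTE h1) (negbTE h2) (negbTE h3) (negbTE h4) mul0r.
rewrite /c eqxx (negbTE ne21) eqxx (negbTE ne31) (negbTE ne32) eqxx.
rewrite (negbTE ne41) (negbTE ne42) (negbTE ne43) eqxx.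
have s2_0 : s2 l0 = l0 by rewrite /s2; evperm.
have s2_1 : s2 l1 = l1 by rewrite /s2; evperm.
have s2_2 : s2 l2 = l2 by rewrite /s2; evperm.
have s2_3 : s2 l3 = l3 by rewrite /s2; evperm.
have s2_4 : s2 l4 = l5 by rewrite /s2; evperm.
have s2_5 : s2 l5 = l4 by rewrite /s2; evperm.
have s3_0 : s3 l0 = l0 by rewrite /s3; evperm.
have s3_1 : s3 l1 = l1 by rewrite /s3; evperm.
have s3_2 : s3 l2 = l2 by rewrite /s3; evperm.
have s3_3 : s3 l3 = l4 by rewrite /s3; evperm.
have s3_4 : s3 l4 = l3 by rewrite /s3; evperm.
have s3_5 : s3 l5 = l5 by rewrite /s3; evperm.
have s4_0 : s4 l0 = l0 by rewrite /s4; evperm.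
have s4_1 : s4 l1 = l1 by rewrite /s4; evperm.
have s4_2 : s4 l2 = l2 by rewrite /s4; evperm.
have s4_3 : s4 l3 = l5 by rewrite /s4; evperm.
have s4_4 : s4 l4 = l3 by rewrite /s4; evperm.
have s4_5 : s4 l5 = l4 by rewrite /s4; evperm.
rewrite /sigmaB !perm1 ?s2_0 ?s2_1 ?s2_2 ?s2_3 ?s2_4 ?s2_5 ?s3_0 ?s3_1 ?s3_2 ?s3_3 ?s3_4 ?s3_5 ?s4_0 ?s4_1 ?s4_2 ?s4_3 ?s4_4 ?s4_5.
rewrite (br23 R l1 l3 l5 l4) (br23 R l2 l3 l5 l4) (br23 R l1 l3 l4 l5) (br23 R l2 l3 l4 l5).
rewrite (br34 R l1 l3 l4 l5) (br34 R l2 l3 l4 l5) (br34 R l0 l2 l3 l4) (br34 R l0 l2 l3 l5) (br34 R l0 l1 l4 l5).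
have G0 := brGP R l0 l1 l2 l3 l4 l5.
have hK : k%:MP * 3%:R = 1 :> PR R.
  by rewrite -(rmorph_nat (@mpolyC _ (CC R))) -rmorphM mulVf ?pnatr_eq0.
have hN : (- k)%:MP = - k%:MP :> PR R by rewrite raddfN.
rewrite hN.
move: G0 hK. move: (k%:MP) => K.
move: (bracket R l0 l1 l2 l5) => x0125.
move: (bracket R l0 l2 l3 l4) => x0234.
move: (bracket R l1 l3 l4 l5) => x1345.
move: (bracket R l0 l1 l2 l4) => x0124.
move: (bracket R l2 l3 l4 l5) => x2345.
move: (bracket R l0 l1 l3 l5) => x0135.
move: (bracket R l0 l2 l3 l5) => x0235.
move: (bracket R l0 l1 l3 l4) => x0134.
move: (bracket R l0 l1 l2 l3) => x0123.
move: (bracket R l0 l1 l4 l5) => x0145.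
move=> G0 hK.
apply/eqP; rewrite -subr_eq0; apply/eqP.
have -> : x0123 * x0145 * x2345 -
  (- K * (x0125 * x0234 * x1345 - x0124 * x2345 * x0135) +
  - K * (x0124 * x0235 * - x1345 - x0125 * - x2345 * x0134) +
  K * (x0125 * - x0234 * - x1345 - x0123 * - x2345 * x0145) +
  K * (x0124 * - x0235 * - - x1345 - x0123 * - - x2345 * - x0145)) =
  (1 - K * 3%:R) * (x0123 * x0145 * x2345) + K * x2345 *
  (x0123 * x0145 - x0124 * x0135 + x0125 * x0134) by ring.
by rewrite hK G0 subrr !mul0r mulr0 addr0.
Qed.
Lemma evalM_bracket (R : realType) (M : 'M[CC R]_(4, 6)) a b c d :
  evalM M (bracket R a b c d) =
  \det (\matrix_(i < 4, k < 4) M i (tnth [tuple a; b; c; d] k)).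
Proof.
rewrite /evalM /bracket -det_map_mx; congr (\det _).
apply/matrixP => i k; rewrite !mxE; apply: (etrans (mevalXU _ _)); exact: mxvecE.
Qed.

Lemma skew_det (R : realType) (M : 'M[CC R]_(4, 6)) a b c d :
  skew_lines M a b c d ->
  \det (\matrix_(i < 4, k < 4) M i (tnth [tuple a; b; c; d] k)) != 0.
Proof.
case=> hab [hcd hcap].
have E : \matrix_(i < 4, k < 4) M i (tnth [tuple a; b; c; d] k)
    = (col_mx (linemx M a b) (linemx M c d))^T.
  apply/matrixP => i k; rewrite !mxE.
  case: k => [[|[|[|[|//]]]] Hk];
  (case: splitP => j /=; case: j => [[|[|//]] hj] /= hh; rewrite ?mxE //=).
rewrite E det_tr -unitfE -unitmxE -row_free_unit /row_free.
have := mxrank_sum_cap (linemx M a b) (linemx M c d).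
rewrite hcap mxrank0 addn0 hab hcd addsmxE => ->.
by [].
Qed.

Lemma meval_sumS (R : realType) (v : 'I_(4 * 6) -> CC R) (F : 'S_6 -> PR R) :
  meval v (\sum_s F s) = \sum_s meval v (F s).
Proof. exact: raddf_sum. Qed.

Lemma evalM_bracket' (R : realType) (M : 'M[CC R]_(4, 6)) a b c d :
  (bracket R a b c d).@[fun k => mxvec M 0 k] =
  \det (\matrix_(i < 4, k < 4) M i (tnth [tuple a; b; c; d] k)).
Proof. exact: evalM_bracket. Qed.

Theorem mainTheorem5 (R : realType) :
  in_ideal_sigmaB (bracket R l0 l1 l2 l3 * bracket R l0 l1 l4 l5 * bracket R l2 l3 l4 l5)
  /\
  (forall M : 'M[CC R]_(4, 6),
     skew_lines M l0 l1 l2 l3 -> skew_lines M l0 l1 l4 l5 -> skew_lines M l2 l3 l4 l5 ->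
     exists s : 'S_6, evalM M (sigmaB R s) != 0).
Proof.
split; first exact: part1.
move=> M h1 h2 h3.
case: (boolP [exists s : 'S_6, evalM M (sigmaB R s) != 0]) => [/existsP //|/existsPn H].
have [r [_ hr]] := part1 R.
have e : evalM M (bracket R l0 l1 l2 l3 * bracket R l0 l1 l4 l5 * bracket R l2 l3 l4 l5) = 0.
  rewrite hr /evalM meval_sumS big1 // => s _.
apply/eqP. rewrite mevalM. rewrite mulf_eq0. apply/orP; right. exact: negbNE (H s).
exfalso. move: e. rewrite /evalM. rewrite 2!mevalM => /eqP; rewrite !mulf_eq0 => /orP [/orP [e1|e1]|e1]; move: e1.
- by rewrite evalM_bracket'; apply/negP; exact: (skew_det R M _ _ _ _ h1).
- by rewrite evalM_bracket'; apply/negP; exact: (skew_det R M _ _ _ _ h2).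
- by rewrite evalM_bracket'; apply/negP; exact: (skew_det R M _ _ _ _ h3).
Qed.
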